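(* Let $(X,\le)$ be a poset and $E$ an equivalence relation on $X$ with ${\le}\subseteq E$. Let $\alpha:X\to X$ be an order automorphism of $(X,\le)$ with $\alpha\subseteq E$ and $\beta:X\to X$ a dual order automorphism of $(X,\le)$ with $\beta\subseteq E$. Then: (i) if $R,S\in\mathsf{Up}(\mathbf E)$ then $R\circ S\in\mathsf{Up}(\mathbf E)$; (ii) if $R,S\in\mathsf{Down}(\mathbf E)$ then $R\circ S\in\mathsf{Down}(\mathbf E)$; (iii) $R\in\mathsf{Up}(\mathbf E)$ iff $R^c\in\mathsf{Down}(\mathbf E)$; (iv) $R\in\mathsf{Up}(\mathbf E)$ iff $R^\smile\in\mathsf{Down}(\mathbf E)$; (v) if $R\in\mathsf{Up}(\mathbf E)$ then $\alpha\circ R\in\mathsf{Up}(\mathbf E)$ and $R\circ\alpha\in\mathsf{Up}(\mathbf E)$; (vi) if $R\in\mathsf{Down}(\mathbf E)$ then $\beta\circ R\circ\beta\in\mathsf{Up}(\mathbf E)$.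
   Context: For binary relations: converse $R^\smile=\{(x,y)\mid(y,x)\in R\}$; composition $R\circ S=\{(x,y)\mid\exists z\,((x,z)\in R,(z,y)\in S)\}$. Functions $X\to X$ are identified with their graphs $\{(x,\gamma(x))\}$. For a poset $(X,\le)$ and an equivalence relation $E\supseteq{\le}$ on $X$, $E$ is partially ordered by $(u,v)\preceq(x,y)$ iff $x\le u$ and $v\le y$; $\mathbf E=(E,\preceq)$, and $\mathsf{Up}(\mathbf E)$, $\mathsf{Down}(\mathbf E)$ are its sets of up-sets and down-sets. For $R\subseteq E$, $R^c=E\setminus R$. An order automorphism is a bijection $\alpha$ with $x\le y\iff\alpha(x)\le\alpha(y)$; a dual order automorphism is a bijection $\beta$ with $x\le y\iff\beta(y)\le\beta(x)$. *)

(* Defs.v *)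
Set Implicit Arguments.

Definition relation (X : Type) := X -> X -> Prop.

Section Rels.
Variable X : Type.

Definition subrel (R S : relation X) : Prop := forall x y, R x y -> S x y.

Definition conv (R : relation X) : relation X := fun x y => R y x.

Definition comp (R S : relation X) : relation X :=
  fun x y => exists z, R x z /\ S z y.

Definition graph (f : X -> X) : relation X := fun x y => f x = y.

Definition relc (E R : relation X) : relation X := fun x y => E x y /\ ~ R x y.

Definition is_poset (le : relation X) : Prop :=
  (forall x, le x x) /\
  (forall x y, le x y -> le y x -> x = y) /\
  (forall x y z, le x y -> le y z -> le x z).

Definition is_equivalence (E : relation X) : Prop :=
  (forall x, E x x) /\
  (forall x y, E x y -> E y x) /\
  (forall x y z, E x y -> E y z -> E x z).

Definition bijective_fun (f : X -> X) : Prop :=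
  (forall x y, f x = f y -> x = y) /\ (forall y, exists x, f x = y).

Definition order_automorphism (le : relation X) (a : X -> X) : Prop :=
  bijective_fun a /\ forall x y, le x y <-> le (a x) (a y).

Definition dual_order_automorphism (le : relation X) (b : X -> X) : Prop :=
  bijective_fun b /\ forall x y, le x y <-> le (b y) (b x).

Definition preceq (le : relation X) (u v x y : X) : Prop := le x u /\ le v y.

Definition UpE (le E R : relation X) : Prop :=
  subrel R E /\
  forall u v x y, R u v -> E x y -> preceq le u v x y -> R x y.

Definition DownE (le E R : relation X) : Prop :=
  subrel R E /\
  forall u v x y, R x y -> E u v -> preceq le u v x y -> R u v.

End Rels.

(* Main.v *)
Require Import Defs.
From Stdlib Require Import Classical.

Theorem lemma3p5 (X : Type) (le E : relation X) (alpha beta : X -> X)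
  (Hle : is_poset le) (HE : is_equivalence E) (HleE : subrel le E)
  (Ha : order_automorphism le alpha) (HaE : subrel (graph alpha) E)
  (Hb : dual_order_automorphism le beta) (HbE : subrel (graph beta) E) :
  (forall R S : relation X, UpE le E R -> UpE le E S -> UpE le E (comp R S)) /\
  (forall R S : relation X, DownE le E R -> DownE le E S -> DownE le E (comp R S)) /\
  (forall R : relation X, subrel R E -> (UpE le E R <-> DownE le E (relc E R))) /\
  (forall R : relation X, subrel R E -> (UpE le E R <-> DownE le E (conv R))) /\
  (forall R : relation X, UpE le E R ->
     UpE le E (comp (graph alpha) R) /\ UpE le E (comp R (graph alpha))) /\
  (forall R : relation X, DownE le E R ->
     UpE le E (comp (comp (graph beta) R) (graph beta))).
Proof.
  destruct Hle as [Hr [Ha' Ht]].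
  destruct HE as [Er [Es Et]].
  destruct Ha as [[ai as_] amon].
  destruct Hb as [[bi bs] bmon].
  unfold UpE, DownE, subrel, comp, graph, relc, conv, preceq in *.
  split; [|split; [|split; [|split; [|split]]]].
  - intros R S [RE Ru] [SE Su]. split.
    + intros x y [z [H1 H2]]. eauto.
    + intros u v x y [z [H1 H2]] Exy [Hxu Hvy]. exists z. split.
      * apply (Ru u z); eauto.
      * apply (Su z v); eauto.
  - intros R S [RE Ru] [SE Su]. split.
    + intros x y [z [H1 H2]]. eauto.
    + intros u v x y [z [H1 H2]] Euv [Hxu Hvy]. exists z. split.
      * apply (Ru u z x z); eauto.
      * apply (Su z v z y); eauto.
  - intros R RE. split.
    + intros [_ Ru]. split.
      * intros x y [H _]; auto.
      * intros u v x y [Exy Hn] Euv P. split; auto. intro Hr'. apply Hn. eauto.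
    + intros [_ Cd]. split; auto.
      intros u v x y Ruv Exy P. apply NNPP. intro Hn.
      destruct (Cd u v x y (conj Exy Hn) (RE u v Ruv) P) as [_ C]. auto.
  - intros R RE. split.
    + intros [_ Ru]. split.
      * intros x y H; auto.
      * intros u v x y H Euv [P1 P2]. apply (Ru y x v u); auto.
    + intros [_ Cd]. split; auto.
      intros u v x y Ruv Exy [P1 P2]. apply (Cd y x v u); auto.
  - intros R [RE Ru]. split.
    + split.
      * intros x y [z [H1 H2]]. eauto.
      * intros u v x y [z [H1 H2]] Exy [Hxu Hvy]. exists (alpha x). split; auto.
        subst z. apply (Ru (alpha u) v); auto.
        -- apply Et with x; [apply Es; apply HaE; reflexivity | exact Exy].
        -- split; [apply (proj1 (amon x u)); exact Hxu | exact Hvy].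

    + split.
      * intros x y [z [H1 H2]]. apply Et with z; auto.
      * intros u v x y [z [H1 H2]] Exy [Hxu Hvy].
        destruct (as_ y) as [z' Hz']. exists z'. split; auto.
        apply (Ru u z); auto.
        -- apply Et with y; auto.
        -- split; auto. apply amon. subst. auto.
  - intros R [RE Rd]. split.
    + intros x y [z [[w [H1 H2]] H3]]. apply Et with w; auto. apply Et with z; auto.
    + intros u v x y [z [[w [H1 H2]] H3]] Exy [Hxu Hvy].
      destruct (bs y) as [b' Hb']. exists b'. split; auto.
      exists (beta x). split; auto.
      apply (Rd (beta x) b' w z); auto.
      * apply Et with x; [apply Es; apply HbE; reflexivity|]. apply Et with y; [exact Exy|]. apply Es; apply HbE; exact Hb'.
      * split.
        -- subst w. apply (proj1 (bmon x u)); exact Hxu.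
        -- apply (proj2 (bmon b' z)). subst. exact Hvy.
Qed.
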